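(* Let $A$ be an Archimedean semiprime $f$-algebra with a multiplicative unit $e$. Then $A$ is bounded quasi-inversion closed if and only if $A$ is bounded inversion closed.
   Context: An $f$-algebra is a real associative algebra that is a vector lattice with $A_+A_+\subseteq A_+$ and such that $a\wedge b=0$ implies $ac\wedge b=ca\wedge b=0$ for all $c\in A_+$; it is semiprime if $0$ is its only nilpotent element. An element $a\in A$ is quasi-invertible if there is $a^\ast\in A$ with $a+a^\ast=aa^\ast$; $Q(A)$ denotes the set of such elements. $A$ is bounded quasi-inversion closed if for every $a\in A$, $|a|\le|a^2-a|$ implies $a\in Q(A)$. A unital $A$ is bounded inversion closed if every $a\in A$ with $e\le a$ has a multiplicative inverse in $A$. *)

(* Defs.v *)
From HB Require Import structures.
From mathcomp Require Import all_boot all_order all_algebra.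
From mathcomp Require Import reals.
Set Implicit Arguments. Unset Strict Implicit. Unset Printing Implicit Defensive.
Import Order.TTheory GRing.Theory Num.Theory.
Local Open Scope ring_scope.

Section FAlgebra.
Variables (R : realType) (A : lmodType R).
Variables (mul : A -> A -> A) (le : rel A) (join : A -> A -> A).

Definition real_assoc_algebra : Prop :=
  [/\ forall x y z, mul x (mul y z) = mul (mul x y) z,
      forall (c : R) x y z, mul (c *: x + y) z = c *: mul x z + mul y z &
      forall (c : R) x y z, mul z (c *: x + y) = c *: mul z x + mul z y].

Definition ordered_vector_space : Prop :=
  [/\ forall x, le x x,
      forall x y, le x y -> le y x -> x = y,
      forall x y z, le x y -> le y z -> le x z,
      forall x y z, le x y -> le (x + z) (y + z) &
      forall (c : R) x y, 0 <= c -> le x y -> le (c *: x) (c *: y)].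

Definition is_join_op : Prop :=
  forall x y, [/\ le x (join x y), le y (join x y) &
                  forall z, le x z -> le y z -> le (join x y) z].

Definition vector_lattice : Prop := ordered_vector_space /\ is_join_op.

Definition meet (x y : A) : A := - join (- x) (- y).
Definition absv (x : A) : A := join x (- x).
Definition positive (x : A) : Prop := le 0 x.

Definition f_algebra : Prop :=
  [/\ real_assoc_algebra, vector_lattice,
      (forall a b, positive a -> positive b -> positive (mul a b)) &
      (forall a b c, meet a b = 0 -> positive c ->
          meet (mul a c) b = 0 /\ meet (mul c a) b = 0)].

(* a ^ (n+1) in the algebra *)
Fixpoint mpow (a : A) (n : nat) : A :=
  match n with O => a | S k => mul a (mpow a k) end.

Definition nilpotent (a : A) : Prop := exists n, mpow a n = 0.
Definition semiprime : Prop := forall a, nilpotent a -> a = 0.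

Definition archimedean : Prop :=
  forall x y, positive x -> (forall n : nat, le (n%:R *: x) y) -> x = 0.

Definition is_mul_unit (e : A) : Prop := forall a, mul e a = a /\ mul a e = a.

Definition quasi_invertible (a : A) : Prop := exists b, a + b = mul a b.

Definition bounded_quasi_inversion_closed : Prop :=
  forall a, le (absv a) (absv (mul a a - a)) -> quasi_invertible a.

Definition bounded_inversion_closed (e : A) : Prop :=
  forall a, le e a -> exists b, mul a b = e /\ mul b a = e.

End FAlgebra.

(* Main.v *)
Require Import Defs.
From HB Require Import structures.
From mathcomp Require Import all_boot all_order all_algebra.
From mathcomp Require Import reals.
Set Implicit Arguments. Unset Strict Implicit. Unset Printing Implicit Defensive.
Import Order.TTheory GRing.Theory Num.Theory.
Local Open Scope ring_scope.

Section L.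
Variables (R : realType) (A : lmodType R) (mul : A -> A -> A) (le : rel A) (join : A -> A -> A).
Hypothesis mulLl : forall (c : R) x y z, mul (c *: x + y) z = c *: mul x z + mul y z.
Hypothesis mulLr : forall (c : R) x y z, mul z (c *: x + y) = c *: mul z x + mul z y.
Hypothesis lerr : forall x, le x x.
Hypothesis leanti : forall x y, le x y -> le y x -> x = y.
Hypothesis letr : forall x y z, le x y -> le y z -> le x z.
Hypothesis leD : forall x y z, le x y -> le (x + z) (y + z).
Hypothesis leZ : forall (c : R) x y, 0 <= c -> le x y -> le (c *: x) (c *: y).
Hypothesis joinP : is_join_op le join.
Hypothesis posM : forall a b, positive le a -> positive le b -> positive le (mul a b).
Hypothesis fax : forall a b c, meet join a b = 0 -> positive le c ->
          meet join (mul a c) b = 0 /\ meet join (mul c a) b = 0.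

Lemma dbl0 (x : A) : x = x + x -> x = 0.
Proof. move=> h; have: x + x - x = x - x by rewrite -h. by rewrite addrK subrr. Qed.
Lemma mul0l z : mul 0 z = 0.
Proof. by apply: dbl0; have := mulLl 1 0 0 z; rewrite !scale1r !addr0. Qed.
Lemma mul0r z : mul z 0 = 0.
Proof. by apply: dbl0; have := mulLr 1 0 0 z; rewrite !scale1r !addr0. Qed.
Lemma mulDl x y z : mul (x + y) z = mul x z + mul y z.
Proof. by have := mulLl 1 x y z; rewrite !scale1r. Qed.
Lemma mulDr x y z : mul z (x + y) = mul z x + mul z y.
Proof. by have := mulLr 1 x y z; rewrite !scale1r. Qed.
Lemma mulNl x z : mul (- x) z = - mul x z.
Proof. by have := mulLl (-1) x 0 z; rewrite !scaleN1r !addr0 mul0l addr0. Qed.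
Lemma mulNr x z : mul z (- x) = - mul z x.
Proof. by have := mulLr (-1) x 0 z; rewrite !scaleN1r !addr0 mul0r addr0. Qed.
Lemma mulBl x y z : mul (x - y) z = mul x z - mul y z.
Proof. by rewrite mulDl mulNl. Qed.
Lemma mulBr x y z : mul z (x - y) = mul z x - mul z y.
Proof. by rewrite mulDr mulNr. Qed.

Lemma le_sub x y : le x y <-> le 0 (y - x).
Proof.
split=> h; first by have := leD (- x) h; rewrite subrr.
by have := leD x h; rewrite add0r subrK.
Qed.
Lemma leN x y : le x y -> le (- y) (- x).
Proof.
move=> h; have := leD (- x - y) h.
have -> : x + (- x - y) = - y by rewrite addrA subrr add0r.
by have -> : y + (- x - y) = - x by rewrite addrC -addrA addNr addr0.
Qed.
Lemma leD2 x y z w : le x y -> le z w -> le (x + z) (y + w).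
Proof.
move=> h1 h2; apply: letr (leD z h1) _.
by rewrite ![y + _]addrC; apply: leD.
Qed.
Lemma addp p q : le 0 p -> le 0 q -> le 0 (p + q).
Proof. by move=> h1 h2; have := leD2 h1 h2; rewrite addr0. Qed.

Lemma join_ub1 x y : le x (join x y). Proof. by case: (joinP x y). Qed.
Lemma join_ub2 x y : le y (join x y). Proof. by case: (joinP x y). Qed.
Lemma join_lub x y z : le x z -> le y z -> le (join x y) z.
Proof. by case: (joinP x y) => _ _; apply. Qed.
Lemma joinC x y : join x y = join y x.
Proof. by apply: leanti; apply: join_lub; rewrite ?join_ub1 ?join_ub2. Qed.
Lemma join_r x y : le x y -> join x y = y.
Proof. by move=> h; apply: leanti; [apply: join_lub | apply: join_ub2]. Qed.
Lemma joinD x y z : join (x + z) (y + z) = join x y + z.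
Proof.
apply: leanti.
  by apply: join_lub; apply: leD; rewrite ?join_ub1 ?join_ub2.
have h : le (join x y) (join (x + z) (y + z) - z).
  apply: join_lub.
    by have := leD (- z) (join_ub1 (x + z) (y + z)); rewrite addrK.
  by have := leD (- z) (join_ub2 (x + z) (y + z)); rewrite addrK.
by have := leD z h; rewrite subrK.
Qed.
Lemma meet_lb1 x y : le (meet join x y) x.
Proof. by rewrite /meet; have := leN (join_ub1 (- x) (- y)); rewrite opprK. Qed.
Lemma meet_lb2 x y : le (meet join x y) y.
Proof. by rewrite /meet; have := leN (join_ub2 (- x) (- y)); rewrite opprK. Qed.
Lemma meet_glb x y z : le z x -> le z y -> le z (meet join x y).
Proof.
move=> h1 h2; rewrite /meet; have := leN (join_lub (leN h1) (leN h2)).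
by rewrite opprK.
Qed.
Lemma meetC x y : meet join x y = meet join y x.
Proof. by rewrite /meet joinC. Qed.
Lemma meetxx x : meet join x x = x.
Proof. by rewrite /meet join_r ?opprK. Qed.
Lemma join_meet x y : join x y + meet join x y = x + y.
Proof.
have e1 : join (-x) (-y) + (x + y) = join x y.
  by rewrite -joinD addrA addNr add0r addrCA addNr addr0 joinC.
by rewrite /meet -e1 addrC addKr.
Qed.

Lemma z4 (a b c d : A) : a - b - (c - d) = (a + d) - (b + c).
Proof. by rewrite opprB opprD addrACA. Qed.
Lemma z4b (a b c d : A) : a + b + (c + d) = a + d + (b + c).
Proof. by rewrite [c + d]addrC addrACA. Qed.

Definition pp x := join x 0.
Definition np x := join (- x) 0.
Lemma pp_ge0 x : le 0 (pp x). Proof. exact: join_ub2. Qed.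
Lemma np_ge0 x : le 0 (np x). Proof. exact: join_ub2. Qed.
Lemma np_eq x : np x = pp x - x.
Proof. by rewrite /np /pp -joinD subrr add0r joinC. Qed.
Lemma ppnp x : pp x - np x = x.
Proof. by rewrite np_eq opprB addrC subrK. Qed.
Lemma dis_pn x : meet join (pp x) (np x) = 0.
Proof.
have h : join (- pp x) (- np x) + pp x = pp x.
  by rewrite -joinD addNr [- np x + _]addrC ppnp joinC.
have : join (- pp x) (- np x) + pp x - pp x = pp x - pp x by rewrite h.
by rewrite addrK subrr /meet => ->; rewrite oppr0.
Qed.

Lemma abs_ge0 x : le 0 (absv join x).
Proof.
set a := absv join x.
have h : le 0 (a + a).
  by have := leD2 (join_ub1 x (- x)) (join_ub2 x (- x)); rewrite subrr.
have h2 : (0:R) <= 2^-1 by rewrite invr_ge0 ler0n.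
have := leZ h2 h.
have -> : (2^-1 : R) *: (a + a) = a.
  by rewrite -mulr2n -scaler_nat scalerA mulVf ?scale1r // pnatr_eq0.
by rewrite scaler0.
Qed.

Lemma abs_pn x : absv join x = pp x + np x.
Proof.
have e : join (pp x) (np x) = pp x + np x.
  by rewrite -join_meet dis_pn addr0.
rewrite -e; apply: leanti.
  apply: join_lub.
    exact: letr (join_ub1 x 0) (join_ub1 _ _).
  exact: letr (join_ub1 (- x) 0) (join_ub2 _ _).
apply: join_lub; apply: join_lub; rewrite ?abs_ge0 //.
  exact: join_ub1.
exact: join_ub2.
Qed.

Lemma abs_pos p : le 0 p -> absv join p = p.
Proof.
move=> h; rewrite /absv joinC join_r //.
by apply: (letr _ h); have := leN h; rewrite oppr0.
Qed.
Lemma abs_opp x : absv join (- x) = absv join x.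
Proof. by rewrite /absv opprK joinC. Qed.
Lemma abs_ge x : le x (absv join x). Proof. exact: join_ub1. Qed.
Lemma abs0 x : absv join x = 0 -> x = 0.
Proof.
move=> h; apply: leanti; first by rewrite -h; apply: abs_ge.
have := leN (abs_ge (- x)); rewrite abs_opp h opprK oppr0; exact.
Qed.

Definition dis a b := meet join a b = 0.
Lemma dis_sym a b : dis a b -> dis b a.
Proof. by rewrite /dis meetC. Qed.
Lemma dis_mulr a b c d : dis a b -> le 0 c -> le 0 d -> dis (mul a c) (mul b d).
Proof.
move=> h hc hd; have [h1 _] := fax h hc.
have [h2 _] := fax (dis_sym h1) hd.
exact: dis_sym.
Qed.
Lemma dis_mull a b c d : dis a b -> le 0 c -> le 0 d -> dis (mul c a) (mul d b).
Proof.
move=> h hc hd; have [_ h1] := fax h hc.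
have [_ h2] := fax (dis_sym h1) hd.
exact: dis_sym.
Qed.
Lemma dis_mul0 a b : dis a b -> le 0 a -> le 0 b -> mul a b = 0.
Proof.
move=> h ha hb; have [h1 _] := fax h hb.
have [_ h2] := fax (dis_sym h1) ha.
by rewrite meetxx in h2.
Qed.
Lemma dis_add u v w : le 0 u -> le 0 v -> le 0 w -> dis u w -> dis v w ->
  dis (u + v) w.
Proof.
move=> hu hv hw huw hvw; rewrite /dis.
set t := meet join (u + v) w.
have t0 : le 0 t by apply: meet_glb => //; apply: addp.
have h1 : le (t - u) v.
  by have := leD (- u) (meet_lb1 (u + v) w); rewrite addrAC subrr add0r.
have h2 : le (t - u) w.
  by have := leD2 (meet_lb2 (u + v) w) (leN hu); rewrite oppr0 addr0.
have h3 : le t u.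
  have := leD u (meet_glb h1 h2); rewrite hvw subrK add0r; exact.
apply: leanti => //; rewrite -huw; apply: meet_glb => //.
exact: meet_lb2.
Qed.
Lemma abs_dis P N : le 0 P -> le 0 N -> dis P N -> absv join (P - N) = P + N.
Proof.
move=> hP hN h.
have e1 : pp (P - N) = P.
  rewrite /pp -(subrr N) joinD.
  by rewrite -[join P N]addr0 -h join_meet addrK.
by rewrite abs_pn np_eq e1 opprB [P + (N - P)]addrC subrK.
Qed.

Lemma abs_mul x y : absv join (mul x y) = mul (absv join x) (absv join y).
Proof.
have px := pp_ge0 x; have nx := np_ge0 x; have py := pp_ge0 y; have ny := np_ge0 y.
have dx := dis_pn x; have dy := dis_pn y.
rewrite -{1}(ppnp x) -{1}(ppnp y) mulBl !mulBr z4 abs_dis.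
- by rewrite !abs_pn mulDl !mulDr [X in _ = X]z4b.
- by apply: addp; apply: posM.
- by apply: addp; apply: posM.
apply: dis_add; try by [apply: posM | apply: addp; apply: posM].
all: apply: dis_sym; apply: dis_add; try by [apply: posM | apply: addp; apply: posM].
- exact: dis_mull (dis_sym dy) _ _.
- exact: dis_mulr (dis_sym dx) _ _.
- exact: dis_mulr dx _ _.
- exact: dis_mull dy _ _.
Qed.

Lemma sq_ge0 x : le 0 (mul x x).
Proof.
have px := pp_ge0 x; have nx := np_ge0 x; have dx := dis_pn x.
rewrite -(ppnp x) mulBl !mulBr z4 (dis_mul0 dx) // (dis_mul0 (dis_sym dx)) //.
by rewrite addr0 subr0; apply: addp; apply: posM.
Qed.


Variable e : A.
Hypothesis mulA : forall x y z, mul x (mul y z) = mul (mul x y) z.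
Hypothesis unit : is_mul_unit mul e.
Hypothesis semi : semiprime mul.

Lemma bqic_bic : bounded_quasi_inversion_closed mul le join ->
  bounded_inversion_closed mul le e.
Proof.
move=> H a hea.
set t := a - e.
have t0 : le 0 t by apply: (proj1 (le_sub e a)).
set c := e - a.
have ct : c = - t by rewrite /c /t opprB.
have h1 : absv join c = t by rewrite ct abs_opp abs_pos.
have h2 : mul c c - c = mul t t + t by rewrite ct mulNl mulNr !opprK.
have hq : le (absv join c) (absv join (mul c c - c)).
  rewrite h1 h2 abs_pos; last by apply: addp => //; apply: posM.
  by have := leD t (posM t0 t0); rewrite add0r.
have [b hb] := H c hq.
set r := e - b.
have har : mul a r = e.
  have -> : a = e - c by rewrite /c opprB addrC subrK.
  rewrite /r mulBl !mulBr (unit e).1 (unit b).1 (unit c).2 -hb.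
  by rewrite opprB [c + b]addrC addrK subrK.
exists r; split => //.
set p := mul r a.
have hpp : mul p p = p.
  by rewrite /p mulA -(mulA r a r) har (unit r).2.
set q := e - p.
have hqq : mul q q = q.
  by rewrite /q mulBl !mulBr (unit e).1 (unit p).1 (unit p).2 hpp subrr subr0.
have q0 : le 0 q by rewrite -hqq; apply: sq_ge0.
have aq : mul a q = 0.
  by rewrite /q /p mulBr (unit a).2 mulA har (unit a).1 subrr.
have := posM t0 q0.
rewrite /t mulBl aq (unit q).1 sub0r => hq'.
have q00 : q = 0.
  by apply: leanti => //; have := leN hq'; rewrite opprK oppr0.
by move: q00; rewrite /q => /eqP; rewrite subr_eq0 => /eqP.
Qed.

Lemma bic_bqic : bounded_inversion_closed mul le e ->
  bounded_quasi_inversion_closed mul le join.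
Proof.
move=> H a ha.
set x := e - a.
have hx : absv join (a - e) = absv join x by rewrite -abs_opp opprB.
have ha2 : mul a a - a = mul a (a - e) by rewrite mulBr (unit a).2.
rewrite ha2 abs_mul hx in ha.
set u := absv join x - e.
set w := np u.
have w0 : le 0 w := np_ge0 u.
have p0 := pp_ge0 u.
have dpw : dis (pp u) w := dis_pn u.
have abs_a0 := abs_ge0 a.
have hau : le 0 (mul (absv join a) u).
  by rewrite /u mulBr (unit _).2; apply: (proj1 (le_sub _ _)).
have ue : u = pp u - w by rewrite ppnp.
have hN : mul (absv join a) w = 0.
  have dPN := dis_mull dpw abs_a0 abs_a0.
  have NP : le (mul (absv join a) w) (mul (absv join a) (pp u)).
    by rewrite ue mulBr in hau; apply: (proj2 (le_sub _ _)).
  have N0 : le 0 (mul (absv join a) w) by apply: posM.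
  apply: leanti => //; rewrite -dPN; apply: meet_glb => //.
have haw : mul a w = 0 by apply: abs0; rewrite abs_mul (abs_pos w0).
have hxw : mul x w = w by rewrite /x mulBl haw subr0 (unit w).1.
have hxw2 : mul (absv join x) w = w.
  by have := abs_mul x w; rewrite hxw (abs_pos w0) => h; rewrite -h.
have huw : mul u w = 0 by rewrite /u mulBl hxw2 (unit w).1 subrr.
have hww : mul w w = 0.
  move: huw; rewrite ue mulBl (dis_mul0 dpw p0 w0) sub0r => /eqP.
  by rewrite oppr_eq0 => /eqP.
have w_0 : w = 0 by apply: semi; exists 1%N.
have ex : le e (absv join x).
  by apply: (proj2 (le_sub _ _)); rewrite -/u ue w_0 subr0.
have [s [hs1 hs2]] := H _ ex.
set r := mul x (mul s s).
have xx : mul x x = mul (absv join x) (absv join x).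
  by rewrite -abs_mul abs_pos //; apply: sq_ge0.
have hxr : mul x r = e.
  rewrite /r (mulA x x) xx -(mulA (absv join x)) (mulA (absv join x) s s) hs1 (unit s).1.
  exact: hs1.
have har : mul a r = r - e.
  move: hxr; rewrite /x mulBl (unit r).1 => h.
  by rewrite -h opprB addrC subrK.
exists (e - r).
by rewrite mulBr (unit a).2 har opprB.
Qed.

End L.

Theorem theorem2 (R : realType) (A : lmodType R) (mul : A -> A -> A)
    (le : rel A) (join : A -> A -> A) (e : A) :
  f_algebra mul le join -> archimedean le -> semiprime mul ->
  is_mul_unit mul e ->
  (bounded_quasi_inversion_closed mul le join <-> bounded_inversion_closed mul le e).
Proof.
move=> [[hA hLl hLr] [[h1 h2 h3 h4 h5] hJ] hP hF] _ hS hU.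
split.
  by apply: bqic_bic.
by apply: bic_bqic.
Qed.
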